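(* Let $\Omega\subset\mathbb{R}^d$ be compact, let $X_1,\ldots,X_n$ be i.i.d. with density $\varphi_P$ and $Y_1,\ldots,Y_n$ i.i.d. with density $\varphi_D$, independent of the $X_i$. Let $\mathcal{C}=\{C^1,\ldots,C^{|\mathcal{C}|}\}$ be a finite partition of $\Omega$ and $A=[\alpha_{ij}]$ a transportation matrix for $\mathcal{C}$. For each $k$, generate a shadow site $X'_k$ independently as follows: let $C^i$ be the cell containing $Y_k$; sample $J_k=j'$ with probability $\alpha_{ij'}/\varphi_D(C^i)$; then sample $X'_k$ from the density $\varphi_P$ conditioned on $X'_k\in C^{J_k}$. Then the shadow sites $X'_1,\ldots,X'_n$ are (i) jointly independent of $X_1,\ldots,X_n$, and (ii) mutually i.i.d. with density $\varphi_P$.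
   Context: For a cell $C$, $\varphi_P(C)=\int_C\varphi_P$, $\varphi_D(C)=\int_C\varphi_D$. A transportation matrix for $\mathcal{C}$ is a matrix $[\alpha_{ij}]$ with $\alpha_{ij}\ge0$, $\sum_j\alpha_{ij}=\varphi_D(C^i)$ for all $i$ and $\sum_i\alpha_{ij}=\varphi_P(C^j)$ for all $j$. *)

(* Defs.v *)
From HB Require Import structures.
From mathcomp Require Import all_boot all_order all_algebra.
From mathcomp Require Import all_classical all_reals all_analysis.
Set Implicit Arguments. Unset Strict Implicit. Unset Printing Implicit Defensive.
Import Order.TTheory GRing.Theory Num.Theory.
Import numFieldNormedType.Exports.
Local Open Scope classical_set_scope.
Local Open Scope ring_scope.

(* R^d is modelled as d.-tuple R with the product (= Borel) sigma-algebra. *)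

(* Canonical identification of a tuple with a row vector of 'rV[R]_d,
   used to speak of compactness in R^d (normed topology on 'rV[R]_d). *)
Definition tuple_to_row (R : realType) (d : nat) (x : d.-tuple R) : 'rV[R]_d :=
  \row_i tnth x i.

Definition compact_Rd (R : realType) (d : nat) (O : set (d.-tuple R)) : Prop :=
  compact (@tuple_to_row R d @` O).

Definition box (R : realType) (d : nat) (a b : d.-tuple R) : set (d.-tuple R) :=
  [set x | forall i : 'I_d, tnth a i <= tnth x i <= tnth b i].

(* mu is Lebesgue measure on R^d: it is the (unique) measure on the Borel sets
   giving each closed box its volume. *)
Definition is_lebesgue_Rd (R : realType) (d : nat)
    (mu : {measure set (d.-tuple R) -> \bar R}) : Prop :=
  forall a b : d.-tuple R, (forall i, tnth a i <= tnth b i) ->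
    mu (box a b) = (\prod_(i < d) (tnth b i - tnth a i))%:E.

Definition density_on (R : realType) (d : nat)
    (mu : {measure set (d.-tuple R) -> \bar R}) (O : set (d.-tuple R))
    (phi : d.-tuple R -> R) : Prop :=
  [/\ measurable_fun setT phi, (forall x, 0 <= phi x),
      (forall x, ~ O x -> phi x = 0),
      mu.-integrable setT (fun x => (phi x)%:E) &
      (\int[mu]_(x in O) (phi x)%:E = 1)%E].

Definition dmass (R : realType) (d : nat)
    (mu : {measure set (d.-tuple R) -> \bar R}) (phi : d.-tuple R -> R)
    (C : set (d.-tuple R)) : R :=
  Rintegral mu C phi.

Definition finite_partition (R : realType) (d m : nat)
    (O : set (d.-tuple R)) (C : 'I_m -> set (d.-tuple R)) : Prop :=
  [/\ (forall i, measurable (C i)),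
      (forall i j, i != j -> C i `&` C j = set0) &
      \bigcup_(i in [set: 'I_m]) C i = O].

Definition transportation_matrix (R : realType) (d m : nat)
    (mu : {measure set (d.-tuple R) -> \bar R}) (phiP phiD : d.-tuple R -> R)
    (C : 'I_m -> set (d.-tuple R)) (alpha : 'M[R]_m) : Prop :=
  [/\ (forall i j, 0 <= alpha i j),
      (forall i, \sum_(j < m) alpha i j = dmass mu phiD (C i)) &
      (forall j, \sum_(i < m) alpha i j = dmass mu phiP (C j))].

(* Probability (law of the shadow-site construction) that Y lies in B and
   the sampled cell index J equals j, and then X' lies in E:
     sum_i (int_{B cap C^i} phi_D) * alpha_{ij}/phi_D(C^i)
       * (int_{E cap C^j} phi_P) / phi_P(C^j).
   (Division by 0 is 0 in MathComp; the corresponding terms have probability 0.) *)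
Definition shadow_law (R : realType) (d m : nat)
    (mu : {measure set (d.-tuple R) -> \bar R}) (phiP phiD : d.-tuple R -> R)
    (C : 'I_m -> set (d.-tuple R)) (alpha : 'M[R]_m)
    (B : set (d.-tuple R)) (j : 'I_m) (E : set (d.-tuple R)) : R :=
  \sum_(i < m) (dmass mu phiD (B `&` C i) * (alpha i j / dmass mu phiD (C i)))
     * (dmass mu phiP (E `&` C j) / dmass mu phiP (C j)).

(* Main.v *)
Require Import Defs.
From HB Require Import structures.
From mathcomp Require Import all_boot all_order all_algebra.
From mathcomp Require Import all_classical all_reals all_analysis.
Import Order.TTheory GRing.Theory Num.Theory.
Import numFieldNormedType.Exports.
Local Open Scope classical_set_scope.
Local Open Scope ring_scope.

Section dm.
Context {R : realType} {d : nat} {mu : {measure set (d.-tuple R) -> \bar R}}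
  {O : set (d.-tuple R)} {phi : d.-tuple R -> R}.
Hypothesis mO : measurable O.
Hypothesis hphi : density_on mu O phi.

Let mphi : measurable_fun setT phi. Proof. by case: hphi => H _ _ _ _. Qed.
Let phi0 x : 0 <= phi x. Proof. by case: hphi => _ H _ _ _. Qed.
Let phiout x : ~ O x -> phi x = 0. Proof. by case: hphi => _ _ H _ _; apply: H. Qed.
Let intT : mu.-integrable setT (EFin \o phi). Proof. by case: hphi => _ _ _ H _. Qed.
Let intO : (\int[mu]_(x in O) (phi x)%:E = 1)%E. Proof. by case: hphi => _ _ _ _ H. Qed.

Lemma dm_int D : measurable D -> mu.-integrable D (EFin \o phi).
Proof. by move=> mD; apply: integrableS intT. Qed.

Lemma dm_ge0 D : 0 <= dmass mu phi D.
Proof. by apply: Rintegral_ge0 => x _. Qed.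

Lemma dm_setIO D : dmass mu phi (D `&` O) = dmass mu phi D.
Proof.
rewrite /dmass Rintegral_mkcond [RHS]Rintegral_mkcond; congr Rintegral.
apply/funext => x; rewrite !patchE.
case: (boolP (x \in D `&` O)) => [/set_mem [xD xO]|].
  by rewrite ifT //; apply/mem_set.
case: (boolP (x \in D)) => // /set_mem xD /negP xDO.
by rewrite phiout // => xO; apply: xDO; apply/mem_set; split.
Qed.

Lemma dm_setT : dmass mu phi setT = 1.
Proof. by rewrite -dm_setIO setTI /dmass /Rintegral intO. Qed.

Lemma dm_le D1 D2 : measurable D1 -> measurable D2 -> D1 `<=` D2 ->
  dmass mu phi D1 <= dmass mu phi D2.
Proof.
move=> m1 m2 s12; rewrite /dmass -(setDUK s12) Rintegral_setU //.
- by rewrite lerDl; apply: dm_ge0.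
- exact: measurableD.
- by rewrite setDUK //; apply: dm_int.
- by rewrite disj_set2E setDIK.
Qed.

Lemma dm_bigU (I : eqType) (s : seq I) (F : I -> set (d.-tuple R)) :
  (forall i, measurable (F i)) -> uniq s ->
  (forall i j, i != j -> F i `&` F j = set0) ->
  dmass mu phi (\big[setU/set0]_(i <- s) F i) = \sum_(i <- s) dmass mu phi (F i).
Proof.
move=> mF; elim: s => [|h t ih] /= us dF.
  by rewrite !big_nil /dmass Rintegral_set0.
move: us => /andP [ht ut].
rewrite !big_cons /dmass Rintegral_setU //.
- by have := ih ut dF; rewrite /dmass => ->.
- by apply: bigsetU_measurable => i _.
- apply: dm_int; apply: measurableU => //; exact: bigsetU_measurable.
- rewrite disj_set2E; apply/eqP; rewrite big_distrr /= big_seq big1 // => i it.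
  apply: dF; apply/eqP => hi; move: ht; rewrite hi it //.
Qed.

End dm.
Section pf.
Context {d1 d2} {T1 : measurableType d1} {T2 : measurableType d2} {R : realType}
 (P : {measure set T1 -> \bar R}) {f : T1 -> T2}.
Hypothesis mf : measurable_fun setT f.
Definition pfm : {measure set T2 -> \bar R}.
refine (pushforward P f : {measure set T2 -> \bar R}).
exact: mf.
Defined.
Lemma pfmE A : pfm A = P (f @^-1` A). Proof. by []. Qed.
End pf.
Lemma mrestrE' {d1} {T1 : measurableType d1} {R : realType}
  (P : {measure set T1 -> \bar R}) (D : set T1) (mD : measurable D) A :
  (mrestr P mD : {measure set T1 -> \bar R}) A = P (A `&` D).
Proof. by []. Qed.
Lemma mscaleE' {d1} {T1 : measurableType d1} {R : realType}
  (P : {measure set T1 -> \bar R}) (r : {nonneg R}) A :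
  (mscale r P : {measure set T1 -> \bar R}) A = (r%:num%:E * P A)%E.
Proof. by []. Qed.
Section tup.
Context {dd : measure_display} {T0 : measurableType dd} {n : nat} {R : realType}.

Definition rect (A : 'I_n -> set T0) : set (n.-tuple T0) :=
  [set x | forall k, A k (tnth x k)].

Definition rects : set (set (n.-tuple T0)) :=
  [set S | exists2 A : 'I_n -> set T0, (forall k, measurable (A k)) & S = rect A].

Lemma rect_measurable A : (forall k, measurable (A k)) -> measurable (rect A).
Proof.
move=> mA.
have -> : rect A = \bigcap_(k in [set: 'I_n]) ((@tnth n T0 ^~ k) @^-1` A k).
  by apply/seteqP; split => x h k //; [move=> _; apply: h | apply: h].
apply: fin_bigcap_measurable; first exact: finite_finset.
move=> k _; rewrite -[X in measurable X]setTI; exact: measurable_tnth.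
Qed.

Lemma rects_gen : (@measurable _ (n.-tuple T0)) = <<s rects >>.
Proof.
apply/seteqP; split; last first.
  apply: smallest_sub; first exact: sigma_algebra_measurable.
  by move=> _ [A mA ->]; exact: rect_measurable.
apply: smallest_sub; first exact: smallest_sigma_algebra.
move=> S; rewrite -bigcup_seq => -[i _ [B mB <-]].
apply: sub_sigma_algebra.
exists (fun k => if k == i then B else setT).
  by move=> k; case: ifP.
apply/seteqP; split => x /=.
  by move=> [_ hx] k; case: eqP => [->|].
by move=> /(_ i); rewrite eqxx.
Qed.

Lemma rects_setI : setI_closed rects.
Proof.
move=> _ _ [A mA ->] [B mB ->]; exists (fun k => A k `&` B k).
  by move=> k; apply: measurableI.
by apply/seteqP; split => x /=; [move=> [ha hb] k; split | move=> h; split => k; case: (h k)].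
Qed.

Lemma tuple_unique (m1 m2 : {measure set (n.-tuple T0) -> \bar R}) :
  (m1 setT < +oo)%E ->
  (forall A, (forall k, measurable (A k)) -> m1 (rect A) = m2 (rect A)) ->
  forall S, measurable S -> m1 S = m2 S.
Proof.
move=> m1oo h S mS.
apply: (measure_unique rects (fun=> setT)) => //.
- exact: rects_gen.
- exact: rects_setI.
- move=> _; exists (fun=> setT) => //.
  by apply/seteqP; split.
- by rewrite bigcup_const.
- by move=> _ [A mA ->]; exact: h.
Qed.

End tup.
Section key.
Context {R : realType} {d m : nat} {mu : {measure set (d.-tuple R) -> \bar R}}
  {O : set (d.-tuple R)} {phiP phiD : d.-tuple R -> R}
  {C : 'I_m -> set (d.-tuple R)} {alpha : 'M[R]_m}.
Hypothesis mO : measurable O.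
Hypothesis hP : density_on mu O phiP.
Hypothesis hD : density_on mu O phiD.
Hypothesis hC : finite_partition O C.
Hypothesis hA : transportation_matrix mu phiP phiD C alpha.

Lemma shadow_sum (E : set (d.-tuple R)) : measurable E ->
  \sum_(j < m) shadow_law mu phiP phiD C alpha setT j E = dmass mu phiP E.
Proof.
move=> mE.
case: hC => mC dC UC.
case: hA => a0 arow acol.
have t1 i j : dmass mu phiD (setT `&` C i) * (alpha i j / dmass mu phiD (C i))
    = alpha i j.
  rewrite setTI; have [z|nz] := eqVneq (dmass mu phiD (C i)) 0.
    have := arow i; rewrite z => /psumr_eq0P => /(_ (fun j _ => a0 i j)) ->//.
    by rewrite mul0r.
  by rewrite mulrC divfK.
have t2 j : shadow_law mu phiP phiD C alpha setT j E = dmass mu phiP (E `&` C j).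
  rewrite /shadow_law (eq_bigr (fun i => alpha i j * (dmass mu phiP (E `&` C j)
     / dmass mu phiP (C j)))); last by move=> i _; rewrite t1.
  rewrite -big_distrl /= acol.
  have [z|nz] := eqVneq (dmass mu phiP (C j)) 0.
    rewrite z mul0r; apply/esym/le_anti; rewrite (dm_ge0 hP) andbT -z.
    apply: (dm_le hP); [exact: measurableI | exact: mC | exact: subIsetr].
  by rewrite mulrC divfK.
rewrite (eq_bigr _ (fun j _ => t2 j)).
rewrite -(dm_bigU hP) //; last first.
- move=> i j ij; rewrite setIACA (dC i j ij) setI0 //.
- exact: index_enum_uniq.
- by move=> j; apply: measurableI.
rewrite -[RHS](dm_setIO hP); congr dmass.
rewrite -UC; apply/seteqP; split => x.
  rewrite -bigcup_seq => -[j _ [xE xC]]; split => //; exists j => //.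
move=> [xE [j _ xC]]; rewrite -bigcup_seq; exists j => //=.
exact: mem_index_enum.
Qed.

End key.
Lemma mpre dT (T : measurableType dT) dU (U : measurableType dU) (f : T -> U)
  (B : set U) : measurable_fun setT f -> measurable B -> measurable [set t | B (f t)].
Proof. by move=> mf mB; rewrite -[X in measurable X]setTI; exact: mf. Qed.

Section prob.
Context (R : realType) (d n m : nat) (mu : {measure set (d.-tuple R) -> \bar R})
  (O : set (d.-tuple R)) (phiP phiD : d.-tuple R -> R)
  (C : 'I_m -> set (d.-tuple R)) (alpha : 'M[R]_m)
  (dT : measure_display) (T : measurableType dT) (P : probability T R)
  (X Y X' : 'I_n -> T -> d.-tuple R) (J : 'I_n -> T -> 'I_m).
Hypothesis mO : measurable O.
Hypothesis hP : density_on mu O phiP.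
Hypothesis hD : density_on mu O phiD.
Hypothesis hC : finite_partition O C.
Hypothesis hA : transportation_matrix mu phiP phiD C alpha.
Hypothesis mX : forall k, measurable_fun setT (X k).
Hypothesis mY : forall k, measurable_fun setT (Y k).
Hypothesis mX' : forall k, measurable_fun setT (X' k).
Hypothesis mJ : forall k (j : 'I_m), measurable [set t | J k t = j].
Hypothesis hjoint : forall (A B E : 'I_n -> set (d.-tuple R)) (j : 'I_n -> 'I_m),
     (forall k, measurable (A k)) -> (forall k, measurable (B k)) ->
     (forall k, measurable (E k)) ->
     P (\bigcap_(k in [set: 'I_n])
          ([set t | A k (X k t)] `&` [set t | B k (Y k t)]
           `&` [set t | J k t = j k] `&` [set t | E k (X' k t)]))
     = ((\prod_(k < n) dmass mu phiP (A k))
        * \prod_(k < n) shadow_law mu phiP phiD C alpha (B k) (j k) (E k))%:E.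

Lemma core (A E : 'I_n -> set (d.-tuple R)) :
  (forall k, measurable (A k)) -> (forall k, measurable (E k)) ->
  P (\bigcap_(k in [set: 'I_n])
       ([set t | A k (X k t)] `&` [set t | E k (X' k t)]))
  = ((\prod_(k < n) dmass mu phiP (A k))
        * \prod_(k < n) dmass mu phiP (E k))%:E.
Proof.
move=> mA mE.
pose F (j : {ffun 'I_n -> 'I_m}) := \bigcap_(k in [set: 'I_n])
   ([set t | A k (X k t)] `&` [set t | setT (Y k t)]
    `&` [set t | J k t = j k] `&` [set t | E k (X' k t)]).
have -> : \bigcap_(k in [set: 'I_n])
       ([set t | A k (X k t)] `&` [set t | E k (X' k t)])
    = \bigcup_(j in [set: {ffun 'I_n -> 'I_m}]) F j.
  apply/seteqP; split => t.
    move=> h; exists [ffun k => J k t] => //= k _.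
    by have [hA' hE'] := h k Logic.I; rewrite ffunE.
  by move=> [j _ h] k _; have [[[? _] _] ?] := h k Logic.I.
rewrite measure_fin_bigcup //; last 2 first. all: try (exact: finite_finset).
- apply/trivIsetP => i j _ _ ij; apply/seteqP; split => // t [hi hj].
  move/negP: ij; apply; apply/eqP/ffunP => k.
  by have [[_ <-] _] := hi k Logic.I; have [[_ <-] _] := hj k Logic.I.
- move=> j _; apply: fin_bigcap_measurable => // k _.
  apply: measurableI; last exact: mpre.
  apply: measurableI; last exact: mJ.
  by apply: measurableI; apply: mpre.
rewrite (fsbigE (index_enum _)) //; last first.
  by move=> i _; rewrite mem_index_enum.
  exact: index_enum_uniq.
transitivity (\sum_(j <- index_enum {ffun 'I_n -> 'I_m} | j \in setT)
  ((\prod_(k < n) dmass mu phiP (A k)) * \prod_(k < n)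
     shadow_law mu phiP phiD C alpha setT (j k) (E k))%:E).
  apply: eq_bigr => j _; rewrite /F.
  exact: (hjoint A (fun=> setT) E (fun k => j k)).
rewrite big_mkcond /=.
under eq_bigr => j _ do rewrite in_setT.
rewrite sumEFin; congr EFin.
rewrite -big_distrr /=; congr (_ * _).
transitivity (\prod_(k < n) \sum_(j < m)
   shadow_law mu phiP phiD C alpha setT j (E k)).
  by rewrite bigA_distr_bigA.
apply: eq_bigr => k _; exact: (shadow_sum hP hC hA _ (mE k)).
Qed.


Let tX t : n.-tuple (d.-tuple R) := [tuple X k t | k < n].
Let tX' t : n.-tuple (d.-tuple R) := [tuple X' k t | k < n].

Let mtX : measurable_fun setT tX.
Proof.
apply/measurable_fun_tnthP => k.
have -> : (@tnth n _ ^~ k \o tX) = X k.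
  by apply/funext => t /=; rewrite tnth_mktuple.
exact: mX.
Qed.

Let mtX' : measurable_fun setT tX'.
Proof.
apply/measurable_fun_tnthP => k.
have -> : (@tnth n _ ^~ k \o tX') = X' k.
  by apply/funext => t /=; rewrite tnth_mktuple.
exact: mX'.
Qed.

Let prod1 : \prod_(k < n) dmass mu phiP setT = 1.
Proof. by rewrite big1 // => k _; exact: (dm_setT hP). Qed.

Let PXrect A : (forall k, measurable (A k)) ->
  P (tX @^-1` rect A) = (\prod_(k < n) dmass mu phiP (A k))%:E.
Proof.
move=> mA.
have -> : tX @^-1` rect A = \bigcap_(k in [set: 'I_n])
       ([set t | A k (X k t)] `&` [set t | (fun=> setT) k (X' k t)]).
  apply/seteqP; split => t /=.
    by move=> h k _; split => //; have := h k; rewrite tnth_mktuple.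
  by move=> h k; rewrite tnth_mktuple; have [] := h k Logic.I.
by rewrite (core A (fun=> setT)) // prod1 mulr1.
Qed.

Let PX'rect E : (forall k, measurable (E k)) ->
  P (tX' @^-1` rect E) = (\prod_(k < n) dmass mu phiP (E k))%:E.
Proof.
move=> mE.
have -> : tX' @^-1` rect E = \bigcap_(k in [set: 'I_n])
       ([set t | (fun=> setT) k (X k t)] `&` [set t | E k (X' k t)]).
  apply/seteqP; split => t /=.
    by move=> h k _; split => //; have := h k; rewrite tnth_mktuple.
  by move=> h k; rewrite tnth_mktuple; have [] := h k Logic.I.
by rewrite (core (fun=> setT) E) // prod1 mul1r.
Qed.

Let stepB A : (forall k, measurable (A k)) -> forall S', measurable S' ->
  P (tX @^-1` rect A `&` tX' @^-1` S') =
  (P (tX @^-1` rect A) * P (tX' @^-1` S'))%E.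
Proof.
move=> mA.
have mD : measurable (tX @^-1` rect A) by apply: mpre => //; exact: rect_measurable.
have r0 : 0 <= \prod_(k < n) dmass mu phiP (A k).
  by apply: prodr_ge0 => k _; exact: (dm_ge0 hP).
pose m1 := pfm (mrestr P mD) mtX'.
pose m2 := pfm (mscale (NngNum r0) P) mtX'.
move=> S' mS'.
have e : m1 S' = m2 S'.
  apply: tuple_unique => //.
  - rewrite pfmE mrestrE'; apply: (le_lt_trans (probability_le1 _ _)); last exact: ltry.
    apply: measurableI => //; exact: mpre.
  - move=> E mE; rewrite !pfmE mrestrE' mscaleE' /= PX'rect // -EFinM.
    have -> : tX' @^-1` rect E `&` tX @^-1` rect A = \bigcap_(k in [set: 'I_n])
       ([set t | A k (X k t)] `&` [set t | E k (X' k t)]).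
      apply/seteqP; split => t /=.
        move=> [h1 h2] k _; split; [have := h2 k | have := h1 k]; by rewrite tnth_mktuple.
      move=> h; split => k; rewrite tnth_mktuple; by have [] := h k Logic.I.
    by rewrite core.
move: e; rewrite !pfmE mrestrE' mscaleE' /= setIC => ->.
by rewrite PXrect.
Qed.

Let stepC S S' : measurable S -> measurable S' ->
  P (tX @^-1` S `&` tX' @^-1` S') = (P (tX @^-1` S) * P (tX' @^-1` S'))%E.
Proof.
move=> mS mS'.
have mD : measurable (tX' @^-1` S') by apply: mpre.
have r0 : 0 <= fine (P (tX' @^-1` S')) by apply: fine_ge0.
have fP : P (tX' @^-1` S') \is a fin_num.
  rewrite ge0_fin_numE //; apply: (le_lt_trans (probability_le1 _ _)); last exact: ltry.
  by [].
pose m1 := pfm (mrestr P mD) mtX.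
pose m2 := pfm (mscale (NngNum r0) P) mtX.
have e : m1 S = m2 S.
  apply: tuple_unique => //.
  - rewrite pfmE mrestrE'; apply: (le_lt_trans (probability_le1 _ _)); last exact: ltry.
    apply: measurableI => //; exact: mpre.
  - move=> A mA; rewrite !pfmE mrestrE' mscaleE' /= stepB //.
    by rewrite fineK // muleC.
move: e; rewrite !pfmE mrestrE' mscaleE' /= => ->.
by rewrite fineK // muleC.
Qed.

Lemma marg k E : measurable E -> P [set t | E (X' k t)] = (dmass mu phiP E)%:E.
Proof.
move=> mE.
have -> : [set t | E (X' k t)] = tX' @^-1` rect (fun l => if l == k then E else setT).
  apply/seteqP; split => t /=.
    by move=> h l; rewrite tnth_mktuple; case: eqP => [->|].
  by move=> /(_ k); rewrite eqxx tnth_mktuple.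
rewrite PX'rect; last by move=> l; case: ifP.
rewrite (bigD1 k) //= eqxx big1 ?mulr1 // => l /negPf ->.
exact: (dm_setT hP).
Qed.

Lemma final :
  (forall S S' : set (n.-tuple (d.-tuple R)), measurable S -> measurable S' ->
     P ([set t | S [tuple X k t | k < n]] `&` [set t | S' [tuple X' k t | k < n]])
     = (P [set t | S [tuple X k t | k < n]] * P [set t | S' [tuple X' k t | k < n]])%E)
  /\
  ((forall k (E : set (d.-tuple R)), measurable E ->
      P [set t | E (X' k t)] = (dmass mu phiP E)%:E) /\
   (forall E : 'I_n -> set (d.-tuple R), (forall k, measurable (E k)) ->
      P (\bigcap_(k in [set: 'I_n]) [set t | E k (X' k t)])
      = (\prod_(k < n) P [set t | E k (X' k t)])%E)).
Proof.
split; first exact: stepC.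
split; first exact: marg.
move=> E mE.
have -> : \bigcap_(k in [set: 'I_n]) [set t | E k (X' k t)] = tX' @^-1` rect E.
  apply/seteqP; split => t /=.
    by move=> h k; rewrite tnth_mktuple; apply: h.
  by move=> h k _; have := h k; rewrite tnth_mktuple.
rewrite PX'rect // -prodEFin; apply: eq_bigr => k _.
by rewrite marg.
Qed.

End prob.

Theorem lemma6 (R : realType) (d n m : nat)
  (mu : {measure set (d.-tuple R) -> \bar R})
  (Omega : set (d.-tuple R))
  (phiP phiD : d.-tuple R -> R)
  (C : 'I_m -> set (d.-tuple R)) (alpha : 'M[R]_m)
  (dT : measure_display) (T : measurableType dT) (P : probability T R)
  (X Y X' : 'I_n -> T -> d.-tuple R) (J : 'I_n -> T -> 'I_m) :
  is_lebesgue_Rd mu ->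
  measurable Omega -> compact_Rd Omega ->
  density_on mu Omega phiP -> density_on mu Omega phiD ->
  finite_partition Omega C ->
  transportation_matrix mu phiP phiD C alpha ->
  (forall k, measurable_fun setT (X k)) ->
  (forall k, measurable_fun setT (Y k)) ->
  (forall k, measurable_fun setT (X' k)) ->
  (forall k (j : 'I_m), measurable [set t | J k t = j]) ->
  (* joint law of the experiment: X_k i.i.d. with density phiP, Y_k i.i.d. with
     density phiD independent of the X's, and, independently for each k,
     J_k | Y_k in C^i  ~  alpha i . / phiD(C^i),  X'_k | J_k = j ~ phiP on C^j *)
  (forall (A B E : 'I_n -> set (d.-tuple R)) (j : 'I_n -> 'I_m),
     (forall k, measurable (A k)) -> (forall k, measurable (B k)) ->
     (forall k, measurable (E k)) ->
     P (\bigcap_(k in [set: 'I_n])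
          ([set t | A k (X k t)] `&` [set t | B k (Y k t)]
           `&` [set t | J k t = j k] `&` [set t | E k (X' k t)]))
     = ((\prod_(k < n) dmass mu phiP (A k))
        * \prod_(k < n) shadow_law mu phiP phiD C alpha (B k) (j k) (E k))%:E) ->
  (* (i) (X'_1..X'_n) is independent of (X_1..X_n) *)
  (forall S S' : set (n.-tuple (d.-tuple R)), measurable S -> measurable S' ->
     P ([set t | S [tuple X k t | k < n]] `&` [set t | S' [tuple X' k t | k < n]])
     = (P [set t | S [tuple X k t | k < n]] * P [set t | S' [tuple X' k t | k < n]])%E)
  /\
  (* (ii) X'_1..X'_n are mutually independent, each with density phiP *)
  ((forall k (E : set (d.-tuple R)), measurable E ->
      P [set t | E (X' k t)] = (dmass mu phiP E)%:E) /\
   (forall E : 'I_n -> set (d.-tuple R), (forall k, measurable (E k)) ->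
      P (\bigcap_(k in [set: 'I_n]) [set t | E k (X' k t)])
      = (\prod_(k < n) P [set t | E k (X' k t)])%E)).
Proof.
move=> _ mO _ hP hD hC hA mX mY mX' mJ hj.
exact: (@final R d n m mu Omega phiP phiD C alpha dT T P X Y X' J hP hC hA mX mY mX' mJ hj).
Qed.
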